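(* For integers $q\ge1$, $a$, $n$ define $S(q,a,n)=\sum_{x=1}^q e\big(\frac{ax^2+nx}{q}\big)$, and for integers $n_1,n_2,n_3,m$ define $$T(q;n_1,n_2,n_3,m)=\sum_{\substack{a=1\\ (a,q)=1}}^q S(q,a,n_1)S(q,a,n_2)S(q,a,n_3)\,e\Big(\frac{\overline{a}\,m}{q}\Big),$$ where $\overline{a}$ denotes the inverse of $a$ modulo $q$. If $q_1,q_2$ are positive integers with $(q_1,q_2)=1$, then for all integers $n_1,n_2,n_3,m$, $$T(q_1q_2;n_1,n_2,n_3,m)=T(q_1;n_1,n_2,n_3,m)\,T(q_2;n_1,n_2,n_3,m).$$
   Context: $e(z)=e^{2\pi i z}$. *)

(* Defs.v *)
From Stdlib Require Import Reals ZArith List.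
From Coquelicot Require Import Coquelicot.

Definition e (x : R) : C := (cos (2 * PI * x), sin (2 * PI * x))%R.

(* sum_{x=1}^{q} f x, for q >= 1 (empty sum if q <= 0). *)
Definition sum1 (q : Z) (f : Z -> C) : C :=
  fold_right (fun k acc => Cplus (f (Z.of_nat k)) acc) (RtoC 0)
             (List.seq 1 (Z.to_nat q)).

(* The inverse of a modulo q: the least b in {1..q} with a*b = 1 (mod q)
   (exists whenever gcd(a,q)=1, q>=1); 0 if none exists. *)
Definition invmod (a q : Z) : Z :=
  match find (fun b => Z.eqb ((a * b) mod q) (1 mod q))
             (map Z.of_nat (List.seq 1 (Z.to_nat q))) with
  | Some b => b
  | None => 0%Z
  end.

Definition S (q a n : Z) : C :=
  sum1 q (fun x => e (IZR (a * x ^ 2 + n * x) / IZR q)).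

Definition T (q n1 n2 n3 m : Z) : C :=
  sum1 q (fun a =>
    if Z.eqb (Z.gcd a q) 1 then
      Cmult (Cmult (Cmult (S q a n1) (S q a n2)) (S q a n3))
            (e (IZR (invmod a q * m) / IZR q))
    else RtoC 0).

(* Main.v *)
From Stdlib Require Import Reals ZArith List Permutation Znumtheory Lia.
From Coquelicot Require Import Coquelicot.
Require Import Defs.

Definition sumG {A} (l : list A) (f : A -> C) : C :=
  fold_right (fun k acc => Cplus (f k) acc) (RtoC 0) l.

Lemma sumG_ext {A} (l : list A) f g : (forall x, In x l -> f x = g x) -> sumG l f = sumG l g.
Proof. induction l as [|a l IH]; intros H; simpl; auto.
  rewrite H by (left; auto). rewrite IH; auto. intros; apply H; right; auto. Qed.

Lemma sumG_app {A} (l1 l2 : list A) f : sumG (l1 ++ l2) f = Cplus (sumG l1 f) (sumG l2 f).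
Proof. induction l1; simpl. ring. rewrite IHl1. ring. Qed.

Lemma sumG_map {A B} (l : list A) (h : A -> B) f : sumG (map h l) f = sumG l (fun x => f (h x)).
Proof. induction l; simpl; auto. rewrite IHl; auto. Qed.

Lemma sumG_perm {A} (l l' : list A) f : Permutation l l' -> sumG l f = sumG l' f.
Proof. intros H; induction H; simpl; auto. rewrite IHPermutation; auto. ring. congruence. Qed.

Lemma sumG_scal {A} (l : list A) c g : Cmult c (sumG l g) = sumG l (fun y => Cmult c (g y)).
Proof. induction l; simpl. ring. rewrite <- IHl. ring. Qed.

Lemma sumG_mult {A B} (l1 : list A) (l2 : list B) f g :
  Cmult (sumG l1 f) (sumG l2 g) = sumG l1 (fun x => sumG l2 (fun y => Cmult (f x) (g y))).
Proof. induction l1; simpl. ring. rewrite <- IHl1, <- sumG_scal. ring. Qed.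

Lemma sumG_prod {A B} (l1 : list A) (l2 : list B) f :
  sumG (list_prod l1 l2) f = sumG l1 (fun x => sumG l2 (fun y => f (x, y))).
Proof. induction l1; simpl; auto. rewrite sumG_app, sumG_map, IHl1. auto. Qed.

Lemma NoDup_prod {A B} (l1 : list A) (l2 : list B) : NoDup l1 -> NoDup l2 -> NoDup (list_prod l1 l2).
Proof. intros H1 H2; induction H1; simpl. constructor.
  apply NoDup_app; auto.
  - apply NoDup_map_NoDup_ForallPairs; auto. intros a b _ _ E; congruence.
  - intros [a b] Hi Hi'. apply in_map_iff in Hi as [y [Ey _]]. injection Ey; intros; subst.
    apply in_prod_iff in Hi' as [Hx _]. auto. Qed.

Definition range0 (Q : Z) := map Z.of_nat (seq 0 (Z.to_nat Q)).

Lemma in_range0 Q y : (0 <= y < Q)%Z -> In y (range0 Q).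
Proof. intros H. unfold range0. apply in_map_iff. exists (Z.to_nat y). split. lia.
  apply in_seq. lia. Qed.

Lemma key {A} (l : list A) (h : A -> Z) Q F : (0 < Q)%Z -> (forall x, F (x mod Q)%Z = F x) ->
  NoDup (map (fun x => (h x mod Q)%Z) l) -> length l = Z.to_nat Q ->
  sumG l (fun x => F (h x)) = sumG (range0 Q) F.
Proof.
  intros HQ HF Hnd Hl.
  rewrite (sumG_ext l (fun x => F (h x)) (fun x => F (h x mod Q)%Z)) by (intros; auto).
  rewrite <- (sumG_map l (fun x => (h x mod Q)%Z) F).
  apply sumG_perm. apply NoDup_Permutation; auto.
  - unfold range0. apply FinFun.Injective_map_NoDup. intros a b; lia. apply seq_NoDup.
  - assert (Hinc : incl (map (fun x => (h x mod Q)%Z) l) (range0 Q)).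
    { intros y Hy. apply in_map_iff in Hy as [x [<- _]]. apply in_range0. apply Z.mod_pos_bound; auto. }
    intros x; split; intros Hx; auto.
    apply (NoDup_length_incl (l:=map (fun x => (h x mod Q)%Z) l) (l':=range0 Q)); auto.
    unfold range0. rewrite length_map, length_map, length_seq. lia.
Qed.

Lemma sum1_G q f : sum1 q f = sumG (seq 1 (Z.to_nat q)) (fun k => f (Z.of_nat k)).
Proof. reflexivity. Qed.

Definition cong (q x y : Z) := exists k, (x - y = k * q)%Z.

Lemma cong_mod q x y : (q <> 0)%Z -> cong q x y -> (x mod q = y mod q)%Z.
Proof. intros Hq [k Hk]. replace x with (y + k*q)%Z by lia. apply Z_mod_plus_full. Qed.

Lemma mod_cong q x y : (q <> 0)%Z -> (x mod q = y mod q)%Z -> cong q x y.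
Proof. intros Hq E. exists (x / q - y / q)%Z.
  pose proof (Z.div_mod x q Hq). pose proof (Z.div_mod y q Hq). nia. Qed.

Lemma cong_small q x y : cong q x y -> (1 <= x <= q)%Z -> (1 <= y <= q)%Z -> x = y.
Proof. intros [k Hk] H1 H2. assert (k = 0)%Z by nia. subst. lia. Qed.

Lemma sum1_range q F : (0 < q)%Z -> (forall x, F (x mod q)%Z = F x) -> sum1 q F = sumG (range0 q) F.
Proof. intros Hq HF. rewrite sum1_G. apply (key _ Z.of_nat); auto.
  - apply NoDup_map_NoDup_ForallPairs; [|apply seq_NoDup].
    intros a b Ha Hb E. apply in_seq in Ha, Hb. apply mod_cong in E; try lia.
    apply cong_small in E; lia.
  - rewrite length_seq; auto. Qed.

Lemma sum1_bij q c F : (0 < q)%Z -> (forall x, F (x mod q)%Z = F x) -> Z.gcd q c = 1%Z ->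
  sum1 q (fun x => F (c * x)%Z) = sum1 q F.
Proof. intros Hq HF Hc. rewrite (sum1_range q F) by auto. rewrite sum1_G.
  apply (key _ (fun k => c * Z.of_nat k)%Z); auto.
  - apply NoDup_map_NoDup_ForallPairs; [|apply seq_NoDup].
    intros a b Ha Hb E. apply in_seq in Ha, Hb. apply mod_cong in E; try lia.
    destruct E as [k Hk]. assert (Hd : (q | c * (Z.of_nat a - Z.of_nat b))%Z).
    { exists k. lia. }
    apply Z.gauss in Hd; auto. destruct Hd as [j Hj].
    assert (cong q (Z.of_nat a) (Z.of_nat b)) by (exists j; lia).
    apply cong_small in H; lia.
  - rewrite length_seq; auto. Qed.

Lemma sum1_crt q1 q2 F : (1 <= q1)%Z -> (1 <= q2)%Z -> Z.gcd q1 q2 = 1%Z ->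
  (forall x, F (x mod (q1*q2))%Z = F x) ->
  sum1 q1 (fun x1 => sum1 q2 (fun x2 => F (x1 * q2 + x2 * q1)%Z)) = sum1 (q1*q2) F.
Proof. intros H1 H2 Hg HF. rewrite (sum1_range (q1*q2) F) by (auto; lia).
  rewrite sum1_G.
  rewrite (sumG_ext _ _ (fun k => sumG (seq 1 (Z.to_nat q2)) (fun j => F (Z.of_nat k * q2 + Z.of_nat j * q1)%Z)))
    by (intros; rewrite sum1_G; auto).
  rewrite <- (sumG_prod _ _ (fun p => F (Z.of_nat (fst p) * q2 + Z.of_nat (snd p) * q1)%Z)).
  apply (key _ (fun p => (Z.of_nat (fst p) * q2 + Z.of_nat (snd p) * q1)%Z)); auto; try lia.
  - apply NoDup_map_NoDup_ForallPairs; [|apply NoDup_prod; apply seq_NoDup].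
    intros [a b] [c d] Ha Hb E. apply in_prod_iff in Ha as [Ha Hb'], Hb as [Hc Hd]. simpl in E.
    apply in_seq in Ha, Hb', Hc, Hd. apply mod_cong in E; try lia.
    destruct E as [k Hk].
    assert (E1 : (q1 | q2 * (Z.of_nat a - Z.of_nat c))%Z) by (exists (k*q2 - Z.of_nat b + Z.of_nat d)%Z; lia).
    assert (E2 : (q2 | q1 * (Z.of_nat b - Z.of_nat d))%Z) by (exists (k*q1 - Z.of_nat a + Z.of_nat c)%Z; lia).
    apply Z.gauss in E1; auto. apply Z.gauss in E2; [|rewrite Z.gcd_comm; auto].
    destruct E1 as [j1 Hj1], E2 as [j2 Hj2].
    assert (cong q1 (Z.of_nat a) (Z.of_nat c)) by (exists j1; lia).
    assert (cong q2 (Z.of_nat b) (Z.of_nat d)) by (exists j2; lia).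
    apply cong_small in H; try lia. apply cong_small in H0; try lia. f_equal; lia.
  - pose proof (length_prod (seq 1 (Z.to_nat q1)) (seq 1 (Z.to_nat q2))) as HL. rewrite HL, !length_seq, Z2Nat.inj_mul; lia.
Qed.

Lemma e_add x y : e (x + y) = Cmult (e x) (e y).
Proof. unfold e, Cmult; simpl.
  replace (2 * PI * (x + y))%R with (2 * PI * x + 2 * PI * y)%R by ring.
  rewrite cos_plus, sin_plus. f_equal; ring. Qed.

Lemma e_nat n : e (INR n) = RtoC 1.
Proof. unfold e, RtoC. pose proof (cos_period 0 n). pose proof (sin_period 0 n).
  replace (2 * PI * INR n)%R with (0 + 2 * INR n * PI)%R by ring.
  rewrite H, H0, cos_0, sin_0. auto. Qed.

Lemma e_int k : e (IZR k) = RtoC 1.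
Proof. destruct (Z_le_gt_dec 0 k).
  - replace (IZR k) with (INR (Z.to_nat k)). apply e_nat. rewrite INR_IZR_INZ. f_equal. lia.
  - replace (IZR k) with (- INR (Z.to_nat (-k)))%R.
    + pose proof (e_nat (Z.to_nat (-k))). unfold e in *. 
      replace (2 * PI * - INR (Z.to_nat (- k)))%R with (- (2 * PI * INR (Z.to_nat (- k))))%R by ring.
      rewrite cos_neg, sin_neg. unfold RtoC in *. injection H; intros A B. rewrite A, B. f_equal; ring.
    + rewrite INR_IZR_INZ, <- opp_IZR. f_equal. lia. Qed.

Lemma e_cong q z z' : (q <> 0)%Z -> cong q z z' -> e (IZR z / IZR q) = e (IZR z' / IZR q).
Proof. intros Hq [k Hk]. replace z with (z' + k * q)%Z by lia.
  replace (IZR (z' + k * q) / IZR q)%R with (IZR z' / IZR q + IZR k)%R.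
  rewrite e_add, e_int. unfold RtoC. destruct (e (IZR z' / IZR q)). unfold Cmult; simpl. f_equal; ring.
  rewrite plus_IZR, mult_IZR. field. apply not_0_IZR; auto. Qed.

Lemma e_split q1 q2 A B : (q1 <> 0)%Z -> (q2 <> 0)%Z ->
  Cmult (e (IZR A / IZR q1)) (e (IZR B / IZR q2)) = e (IZR (A * q2 + B * q1) / IZR (q1 * q2)).
Proof. intros H1 H2. rewrite <- e_add. f_equal. rewrite plus_IZR, !mult_IZR. field.
  split; apply not_0_IZR; auto. Qed.

Lemma sum1_ext q f g : (forall x, f x = g x) -> sum1 q f = sum1 q g.
Proof. intros H. rewrite !sum1_G. apply sumG_ext. intros; auto. Qed.

Lemma cong_poly q r x a n : cong q r x -> cong q (a * r ^ 2 + n * r) (a * x ^ 2 + n * x).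
Proof. intros [k Hk]. exists (a * (2 * x * k + k * k * q) + n * k)%Z.
  replace r with (x + k * q)%Z by lia. ring. Qed.

Lemma cong_modl q x : (q <> 0)%Z -> cong q (x mod q) x.
Proof. intros Hq. exists (- (x / q))%Z. pose proof (Z.div_mod x q Hq). lia. Qed.

Lemma S_cong q a a' n : (q <> 0)%Z -> cong q a a' -> S q a n = S q a' n.
Proof. intros Hq [k Hk]. unfold S. apply sum1_ext. intros x. apply e_cong; auto.
  exists (k * x ^ 2)%Z. replace a with (a' + k * q)%Z by lia. ring. Qed.

Lemma S_crt q1 q2 a n : (1 <= q1)%Z -> (1 <= q2)%Z -> Z.gcd q1 q2 = 1%Z ->
  S (q1 * q2) a n = Cmult (S q1 (a * q2) n) (S q2 (a * q1) n).
Proof. intros H1 H2 Hg. unfold S at 1.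
  rewrite <- sum1_crt by (auto; intros x; apply e_cong; try lia; apply cong_poly, cong_modl; lia).
  unfold S. rewrite !sum1_G, sumG_mult. apply sumG_ext. intros x1 _.
  rewrite sum1_G. apply sumG_ext. intros x2 _.
  rewrite e_split by lia. apply e_cong. lia.
  exists (2 * a * Z.of_nat x1 * Z.of_nat x2)%Z. ring. Qed.

Lemma gcd_bez x y : Z.gcd x y = 1%Z -> exists s t, (s * x + t * y = 1)%Z.
Proof. intros H. apply Zgcd_1_rel_prime, rel_prime_bezout in H. destruct H as [s t H]. eauto. Qed.

Lemma bez_gcd x y s t : (s * x + t * y = 1)%Z -> Z.gcd x y = 1%Z.
Proof. intros H. apply Zgcd_1_rel_prime, bezout_rel_prime. econstructor; eauto. Qed.

Lemma find_ext {A} (f g : A -> bool) l : (forall x, f x = g x) -> find f l = find g l.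
Proof. intros H; induction l; simpl; auto. rewrite H, IHl; auto. Qed.

Lemma invmod_mod a q : (q <> 0)%Z -> invmod (a mod q) q = invmod a q.
Proof. intros Hq. unfold invmod. rewrite (find_ext _ (fun b => Z.eqb ((a * b) mod q) (1 mod q))); auto.
  intros b. rewrite Z.mul_mod_idemp_l; auto. Qed.

Lemma invmod_spec a q : (1 <= q)%Z -> Z.gcd a q = 1%Z -> cong q (a * invmod a q) 1.
Proof. intros Hq Hg. unfold invmod.
  destruct (find _ _) as [b|] eqn:Ef.
  - apply find_some in Ef as [_ Hb]. apply Z.eqb_eq in Hb. apply mod_cong; auto; lia.
  - exfalso. destruct (gcd_bez _ _ Hg) as [s [t Hst]].
    pose proof (Z.div_mod (s - 1) q ltac:(lia)). pose proof (Z.mod_pos_bound (s-1) q ltac:(lia)).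
    set (b := ((s - 1) mod q + 1)%Z) in *.
    pose proof (find_none _ _ Ef b) as Hn.
    assert (Hin : In b (map Z.of_nat (seq 1 (Z.to_nat q)))).
    { apply in_map_iff. exists (Z.to_nat b). split. lia. apply in_seq. lia. }
    specialize (Hn Hin). apply Z.eqb_neq in Hn. apply Hn. apply cong_mod. lia.
    exists (- t - a * ((s - 1) / q))%Z. unfold b.
    replace ((s - 1) mod q)%Z with (s - 1 - q * ((s - 1) / q))%Z by lia. nia. Qed.

Lemma inv_uniq q b x y : cong q (b * x) 1 -> cong q (b * y) 1 -> cong q x y.
Proof. intros [k1 H1] [k2 H2]. exists (y * k1 - x * k2)%Z.
  transitivity (y * (b * x - 1) - x * (b * y - 1))%Z. ring. rewrite H1, H2. ring. Qed.

Lemma L1 q1 q2 a1 a2 s t u v : (s * (a1 * q2 + a2 * q1) + t * (q1 * q2) = 1)%Z ->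
  (u * q2 + v * q1 = 1)%Z -> Z.gcd (a1 * (q2 * q2)) q1 = 1%Z.
Proof. intros H Hb.
  set (A := (s * a2 + t * q2)%Z).
  apply (bez_gcd _ _ (s * u) (A + v - q1 * A * v)).
  assert (E1 : (s * a1 * q2 = 1 - q1 * A)%Z) by (unfold A; lia).
  assert (E2 : (u * q2 = 1 - q1 * v)%Z) by lia.
  transitivity ((s * a1 * q2) * (u * q2) + (A + v - q1 * A * v) * q1)%Z. ring.
  rewrite E1, E2. ring. Qed.

Lemma L2 q1 q2 a1 a2 : Z.gcd (a1 * (q2 * q2)) q1 = 1%Z -> Z.gcd (a1 * q2 + a2 * q1) q1 = 1%Z.
Proof. intros H. destruct (gcd_bez _ _ H) as [s [t Hst]].
  apply (bez_gcd _ _ (s * q2) (t - s * q2 * a2)). rewrite <- Hst. ring. Qed.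

Lemma L3 q1 q2 a1 a2 ia u v : cong (q1 * q2) ((a1 * q2 + a2 * q1) * ia) 1 ->
  (u * q2 + v * q1 = 1)%Z -> cong q1 (a1 * (q2 * q2) * (ia * u)) 1.
Proof. intros [k Hk] Hb. set (X := (k * q2 - a2 * ia)%Z).
  exists (X - v - v * q1 * X)%Z.
  assert (E1 : (a1 * q2 * ia = 1 + q1 * X)%Z) by (unfold X; lia).
  assert (E2 : (u * q2 = 1 - q1 * v)%Z) by lia.
  transitivity ((a1 * q2 * ia) * (u * q2) - 1)%Z. ring.
  rewrite E1, E2. ring. Qed.

Definition tT (q n1 n2 n3 m a : Z) : C :=
  if Z.eqb (Z.gcd a q) 1 then
      Cmult (Cmult (Cmult (S q a n1) (S q a n2)) (S q a n3))
            (e (IZR (invmod a q * m) / IZR q))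
  else RtoC 0.

Lemma T_tT q n1 n2 n3 m : T q n1 n2 n3 m = sum1 q (tT q n1 n2 n3 m).
Proof. reflexivity. Qed.

Lemma tT_per q n1 n2 n3 m x : (1 <= q)%Z -> tT q n1 n2 n3 m (x mod q) = tT q n1 n2 n3 m x.
Proof. intros Hq. unfold tT. rewrite Z.gcd_mod by lia. rewrite Z.gcd_comm.
  destruct (Z.gcd x q =? 1)%Z; auto.
  rewrite invmod_mod by lia. rewrite !(S_cong q (x mod q) x) by (try lia; apply cong_modl; lia). auto. Qed.

Lemma cong_mulr q x y m : cong q x y -> cong q (x * m) (y * m).
Proof. intros [k Hk]. exists (k * m)%Z. transitivity ((x - y) * m)%Z. ring. rewrite Hk. ring. Qed.

Lemma sq_coprime q1 q2 u v : (u * q2 + v * q1 = 1)%Z -> Z.gcd q1 (q2 * q2) = 1%Z.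
Proof. intros Hb. rewrite Z.gcd_comm. apply (bez_gcd _ _ (u * u) (2 * v - v * v * q1)).
  transitivity ((u * q2) * (u * q2) + (2 * v - v * v * q1) * q1)%Z. ring.
  replace (u * q2)%Z with (1 - v * q1)%Z by lia. ring. Qed.

Lemma pointwise q1 q2 u v n1 n2 n3 m a1 a2 : (1 <= q1)%Z -> (1 <= q2)%Z -> Z.gcd q1 q2 = 1%Z ->
  (u * q2 + v * q1 = 1)%Z ->
  tT (q1 * q2) n1 n2 n3 m (a1 * q2 + a2 * q1) =
  Cmult (tT q1 n1 n2 n3 m (q2 * q2 * a1)) (tT q2 n1 n2 n3 m (q1 * q1 * a2)).
Proof. intros H1 H2 Hg Hb.
  replace (q2 * q2 * a1)%Z with (a1 * (q2 * q2))%Z by ring.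
  replace (q1 * q1 * a2)%Z with (a2 * (q1 * q1))%Z by ring.
  unfold tT. set (a := (a1 * q2 + a2 * q1)%Z).
  destruct (Z.eqb_spec (Z.gcd a (q1 * q2)) 1) as [G|G].
  - destruct (gcd_bez _ _ G) as [s [t Hst]].
    assert (G1 : Z.gcd (a1 * (q2 * q2)) q1 = 1%Z) by (apply (L1 q1 q2 a1 a2 s t u v); auto).
    assert (G2 : Z.gcd (a2 * (q1 * q1)) q2 = 1%Z).
    { apply (L1 q2 q1 a2 a1 s t v u); unfold a in Hst; lia. }
    rewrite G1, G2, Z.eqb_refl.
    rewrite !(S_crt q1 q2 a) by auto.
    rewrite !(S_cong q1 (a * q2) (a1 * (q2 * q2))) by (try lia; exists (a2 * q2)%Z; unfold a; ring).
    rewrite !(S_cong q2 (a * q1) (a2 * (q1 * q1))) by (try lia; exists (a1 * q1)%Z; unfold a; ring).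
    set (ia := invmod a (q1 * q2)).
    pose proof (invmod_spec a (q1 * q2) ltac:(nia) G) as Hia. fold ia in Hia.
    assert (C1 : cong q1 (invmod (a1 * (q2 * q2)) q1 * m) (ia * u * m)).
    { apply cong_mulr. apply (inv_uniq q1 (a1 * (q2 * q2))). apply invmod_spec; auto.
      apply (L3 q1 q2 a1 a2 ia u v); auto. }
    assert (C2 : cong q2 (invmod (a2 * (q1 * q1)) q2 * m) (ia * v * m)).
    { apply cong_mulr. apply (inv_uniq q2 (a2 * (q1 * q1))). apply invmod_spec; auto.
      apply (L3 q2 q1 a2 a1 ia v u); try lia.
      destruct Hia as [k Hk]. exists k. unfold a in Hk. lia. }
    assert (HE : e (IZR (ia * m) / IZR (q1 * q2)) =
       Cmult (e (IZR (invmod (a1 * (q2 * q2)) q1 * m) / IZR q1))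
             (e (IZR (invmod (a2 * (q1 * q1)) q2 * m) / IZR q2))).
    { rewrite (e_cong q1 _ _ ltac:(lia) C1), (e_cong q2 _ _ ltac:(lia) C2), e_split by lia.
      apply e_cong. lia. exists 0%Z.
      transitivity (ia * m * (1 - (u * q2 + v * q1)))%Z. ring. rewrite Hb. ring. }
    rewrite HE. ring.
  - destruct (Z.eqb_spec (Z.gcd (a1 * (q2 * q2)) q1) 1) as [G1|G1];
    destruct (Z.eqb_spec (Z.gcd (a2 * (q1 * q1)) q2) 1) as [G2|G2].
    + exfalso. apply G. apply Zgcd_1_rel_prime. apply rel_prime_mult; apply Zgcd_1_rel_prime.
      * apply (L2 q1 q2 a1 a2); auto.
      * replace a with (a2 * q1 + a1 * q2)%Z by (unfold a; ring). apply (L2 q2 q1 a2 a1); auto.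
    + unfold RtoC, Cmult; simpl. f_equal; ring.
    + unfold RtoC, Cmult; simpl. f_equal; ring.
    + unfold RtoC, Cmult; simpl. f_equal; ring.
Qed.

Theorem lemma3p5 (q1 q2 : Z) (hq1 : (1 <= q1)%Z) (hq2 : (1 <= q2)%Z)
  (hcop : Z.gcd q1 q2 = 1%Z) (n1 n2 n3 m : Z) :
  T (q1 * q2) n1 n2 n3 m = Cmult (T q1 n1 n2 n3 m) (T q2 n1 n2 n3 m).
Proof.
  rewrite !T_tT.
  assert (hc' : Z.gcd q2 q1 = 1%Z) by (rewrite Z.gcd_comm; auto).
  destruct (gcd_bez _ _ hc') as [u [v Hb]].
  rewrite <- (sum1_crt q1 q2) by (auto; intros; apply tT_per; lia).
  rewrite (sum1_ext q1 _ (fun a1 => sum1 q2 (fun a2 =>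
     Cmult (tT q1 n1 n2 n3 m (q2 * q2 * a1)) (tT q2 n1 n2 n3 m (q1 * q1 * a2)))))
    by (intros; apply sum1_ext; intros; apply (pointwise q1 q2 u v); auto).
  rewrite <- (sum1_bij q1 (q2 * q2) (tT q1 n1 n2 n3 m)) by
    (try lia; try (intros; apply tT_per; lia); apply (sq_coprime q1 q2 u v); auto).
  rewrite <- (sum1_bij q2 (q1 * q1) (tT q2 n1 n2 n3 m)) by
    (try lia; try (intros; apply tT_per; lia); apply (sq_coprime q2 q1 v u); lia).
  rewrite !sum1_G, sumG_mult. apply sumG_ext. intros x _. rewrite sum1_G. reflexivity.
Qed.
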